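(* Let $k\ge 2$, $n=2k$, $\mathcal{N}=\{0,1,\dots,n-1\}$, and let $A,B,C$ be the sets of elements of $\mathcal{N}$ congruent to $0,1,2 \pmod 3$ respectively. Let $j\in\{0,1,2\}$ with $\sum_{t\in\mathcal{N}}t\equiv j\pmod 3$. Let $X$ be a $(k-1)$-subset of $\mathcal{N}$ with $A\not\subset X$, $B\not\subset X$ and $C\not\subset X$. Then $X\in\mathcal{D}(\mathcal{R}_i)$ for every $i\in\{0,1,2\}$ with $i\equiv 1-j\pmod 3$ or $i\equiv 2-j\pmod 3$; that is, for each such $i$ there exist $X',Y'\in\mathcal{R}_i$ with $X=X'\setminus Y'$.
   Context: For $i\in\{0,1,2\}$, $\mathcal{R}_i=\{\{x_1,\dots,x_k\}\in\binom{\mathcal{N}}{k} : x_1+\dots+x_k\equiv i \pmod 3\}$, where $\binom{\mathcal{N}}{k}$ is the family of $k$-element subsets of $\mathcal{N}$. For a family $\mathcal{F}$, $\mathcal{D}(\mathcal{F})=\{F\setminus F' : F,F'\in\mathcal{F}\}$. *)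

(* Defs.v *)
From mathcomp Require Import all_boot.
Set Implicit Arguments. Unset Strict Implicit. Unset Printing Implicit Defensive.

Definition Rfam (n k i : nat) : {set {set 'I_n}} :=
  [set F : {set 'I_n} | (#|F| == k) && ((\sum_(x in F) (x : nat)) %% 3 == i %% 3)].

Definition Dfam (n : nat) (F : {set {set 'I_n}}) : {set {set 'I_n}} :=
  [set X | [exists F1 in F, exists F2 in F, X == F1 :\: F2]].

Definition resid (n r : nat) : {set 'I_n} := [set x : 'I_n | x %% 3 == r].

(* Main.v *)
Require Import Defs.
From mathcomp Require Import all_boot.
From mathcomp Require Import zify.

Lemma resid_out n (X : {set 'I_n}) r :
  ~~ (resid n r \subset X) -> exists y : 'I_n, y \notin X /\ y %% 3 = r.
Proof.
move=> /subsetPn [y]; rewrite inE => /eqP hy hyX; by exists y.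
Qed.

Lemma ar_hab i j x : i < 3 -> j < 3 ->
  (i %% 3 == (1 + 3 - j) %% 3) || (i %% 3 == (2 + 3 - j) %% 3) ->
  (i + 3 - x %% 3) %% 3 != (j + 6 - x %% 3 - i) %% 3.
Proof. have := ltn_pmod x (isT : 0 < 3). lia. Qed.

Lemma ar_sum i j x b s : i < 3 -> (x + (b + s)) %% 3 = j ->
  b %% 3 = (j + 6 - x %% 3 - i) %% 3 -> s %% 3 == i %% 3.
Proof. have := ltn_pmod x (isT : 0 < 3). lia. Qed.

Lemma ar_fin i x a : i < 3 -> a %% 3 = (i + 3 - x %% 3) %% 3 -> (a + x) %% 3 == i %% 3.
Proof. have := ltn_pmod x (isT : 0 < 3). lia. Qed.

Lemma ar_card k c d : 2 <= k -> c + d = 2 * k -> c = k.-1 -> d = k.+1.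
Proof. lia. Qed.

Theorem lemma2p1 (k : nat) (hk : 2 <= k) (j : nat) (hj : j < 3)
  (hsum : (\sum_(t < 2 * k) t) %% 3 = j)
  (X : {set 'I_(2 * k)}) (hX : #|X| = k.-1)
  (hA : ~~ (resid (2 * k) 0 \subset X))
  (hB : ~~ (resid (2 * k) 1 \subset X))
  (hC : ~~ (resid (2 * k) 2 \subset X)) :
  forall i : nat, i < 3 ->
    (i %% 3 == (1 + 3 - j) %% 3) || (i %% 3 == (2 + 3 - j) %% 3) ->
    X \in Dfam (Rfam (2 * k) k i).
Proof.
move=> i hi hij.
set x := \sum_(t in X) (t : nat).
have hout : forall r, r < 3 -> exists y : 'I_(2 * k), y \notin X /\ y %% 3 = r.
  move=> r; case: r => [|[|[|r]]] // _; exact: resid_out.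
have [a [haX ha]] := hout ((i + 3 - x %% 3) %% 3) (ltn_pmod _ (isT : 0 < 3)).
have [b [hbX hb]] := hout ((j + 6 - x %% 3 - i) %% 3) (ltn_pmod _ (isT : 0 < 3)).
have hab : a != b.
  apply/eqP => eab; move: hb; rewrite -eab ha; apply/eqP; exact: ar_hab.
have hS : \sum_(t < 2 * k) (t : nat) = x + \sum_(t in ~: X) (t : nat).
  rewrite (bigID (fun t => t \in X)) /=; congr (_ + _).
  by apply: eq_bigl => t; rewrite inE.
have hbC : b \in ~: X by rewrite inE.
have hS2 : \sum_(t in ~: X) (t : nat) = b + \sum_(t in ~: X :\ b) (t : nat).
  by rewrite (big_setD1 b hbC).
have hU : \sum_(t in a |: X) (t : nat) = a + x by rewrite big_setU1 //=.
clearbody x.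
have hcardC : #|~: X| = k.+1.
  have := cardsC X; rewrite card_ord => h; exact: ar_card hk h hX.
rewrite inE; apply/existsP; exists (a |: X); rewrite andbC; apply/andP; split.
  apply/existsP; exists (~: X :\ b); apply/andP; split.
    rewrite inE; apply/andP; split.
      rewrite (cardsD1 b) hbC in hcardC; apply/eqP; move: hcardC; by case.
    move: hsum; rewrite hS hS2.
    move=> h; exact: ar_sum hi h hb.
  apply/eqP/setP => t; rewrite !inE.
  case: (eqVneq t a) => [->|hta] /=; first by rewrite (negbTE haX) hab.
  by case: (t \in X); rewrite ?andbF ?andbT.
rewrite inE; apply/andP; split.
  rewrite cardsU1 haX hX add1n; apply/eqP; by rewrite (ltn_predK hk).
rewrite hU.
exact: ar_fin hi ha.
Qed.
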